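(* For $n\ge2$, \begin{align*} \left|\Pi_n\wr C_2(1^11^2,1^22^1)\right|&=2B(n)+\sum_{j=2}^n\sum_{k=0}^{n-j}B(n-j-k)+B(n-1)\\ &\quad+\sum_{j=2}^{n-1}B(j-1)\left(B(n-j)+\sum_{k=1}^{n-j}\left(\left(k+\binom{n-j}{k}\right) B(n-j-k)\right)\right), \end{align*} where $B(m)$ is the $m$th Bell number.
   Context: For $n\ge0$ let $[n]=\{1,\dots,n\}$. A $2$-colored set partition of $[n]$ is a set partition of $[n]$ together with an assignment of a color from $\{1,2\}$ to each element; $\Pi_n\wr C_2$ is the set of these. For a set $S$ of patterns, $\Pi_n\wr C_2(S)$ is the set of such colored partitions avoiding every pattern in $S$ in the pattern sense. For the patterns used here: $\sigma$ contains $1^11^2$ iff there are $i<j$ in the same block with $i$ colored $1$ and $j$ colored $2$; $\sigma$ contains $1^22^1$ iff there are $i<j$ in different blocks with $i$ colored $2$ and $j$ colored $1$. $B(m)$ is the number of set partitions of $[m]$, with $B(0)=1$. *)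

(* Defs.v *)
From mathcomp Require Import all_boot.
Set Implicit Arguments. Unset Strict Implicit. Unset Printing Implicit Defensive.

(* [n] = {1,...,n} is modelled by 'I_n = {0,...,n-1} (order preserved).
   Colors {1,2} are modelled by 'I_2: color 1 = ord0, color 2 = ord_max. *)
Definition color1 : 'I_2 := ord0.
Definition color2 : 'I_2 := ord_max.

Definition is_setpart (n : nat) (P : {set {set 'I_n}}) : bool :=
  partition P [set: 'I_n].

Definition Bell (m : nat) : nat := #|[set P : {set {set 'I_m}} | is_setpart P]|.

Definition same_block (n : nat) (P : {set {set 'I_n}}) (i j : 'I_n) : bool :=
  [exists B in P, (i \in B) && (j \in B)].

Definition contains_1112 (n : nat) (P : {set {set 'I_n}}) (c : {ffun 'I_n -> 'I_2}) : bool :=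
  [exists i : 'I_n, exists j : 'I_n,
     [&& i < j, same_block P i j, c i == color1 & c j == color2]].

Definition contains_1221 (n : nat) (P : {set {set 'I_n}}) (c : {ffun 'I_n -> 'I_2}) : bool :=
  [exists i : 'I_n, exists j : 'I_n,
     [&& i < j, ~~ same_block P i j, c i == color2 & c j == color1]].

Definition avoiders (n : nat) :=
  [set Pc : {set {set 'I_n}} * {ffun 'I_n -> 'I_2} |
     [&& is_setpart Pc.1, ~~ contains_1112 Pc.1 Pc.2 & ~~ contains_1221 Pc.1 Pc.2]].

(* Main.v *)
Require Import Defs.
From mathcomp Require Import all_boot.
From mathcomp Require Import zify.
Set Implicit Arguments. Unset Strict Implicit. Unset Printing Implicit Defensive.

Definition pc (T : finType) (A : {set T}) :=
  #|[set P : {set {set T}} | partition P A]|.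

Lemma imset_preim (T T' : finType) (f : T -> T') (A : {set T}) (S : {set T'}) :
  S \subset f @: A -> f @: (f @^-1: S) = S.
Proof.
move=> sub; apply/setP => y; apply/imsetP/idP => [[x]|yS].
  by rewrite inE => ? ->.
by case/imsetP: (subsetP sub y yS) => x _ E; exists x => //; rewrite inE -E.
Qed.

Lemma pc_inj (T T' : finType) (f : T -> T') (A : {set T}) :
  injective f -> pc A = pc (f @: A).
Proof.
move=> injf; rewrite /pc.
set Phi := fun P : {set {set T}} => [set f @: (B : {set T}) | B in P].
have injPhi : injective Phi by apply: imset_inj; apply: imset_inj.
rewrite -(card_imset _ injPhi).
suff -> : Phi @: [set P | partition P A] = [set Q | partition Q (f @: A)] by [].
apply/setP => Q; rewrite inE.
apply/imsetP/idP => [[P] | pQ].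
  by rewrite inE => pP ->; rewrite /Phi imset_partition.
have subQ : forall S, S \in Q -> S \subset f @: A.
  by move=> S SQ; rewrite -(cover_partition pQ); apply: bigcup_sup.
have E : [set f @: (B : {set T}) | B in [set f @^-1: (S : {set T'}) | S in Q]] = Q.
  apply/setP => S; apply/imsetP/idP => [[B /imsetP[S' S'Q ->] ->]|SQ].
    by rewrite (imset_preim (subQ _ S'Q)).
  exists (f @^-1: S); first by apply: imset_f.
  by rewrite (imset_preim (subQ _ SQ)).
exists [set f @^-1: (S : {set T'}) | S in Q]; last by rewrite /Phi E.
by rewrite inE -(imset_partition _ _ injf) E.
Qed.

Lemma pc_Bell (T : finType) (A : {set T}) : pc A = Bell #|A|.
Proof.
rewrite /Bell.
have E : A = (@enum_val _ (mem A)) @: [set: 'I_#|A|].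
  apply/setP => x; apply/idP/imsetP => [xA|[i _ ->]]; last exact: enum_valP.
  by exists (enum_rank_in xA x) => //; rewrite enum_rankK_in.
rewrite {1}E -pc_inj; last exact: enum_val_inj.
by rewrite /pc; apply: eq_card => P; rewrite !inE /is_setpart.
Qed.

Section Split.
Variables (T : finType) (A B M : {set T}).
Hypothesis hAB : forall x, x \in A -> x \in B -> False.
Hypothesis hAM : forall x, x \in A -> x \in M -> False.
Hypothesis hBM : forall x, x \in B -> x \in M -> False.
Hypothesis hcov : forall x, [|| x \in A, x \in B | x \in M].

Definition okblocks (P : {set {set T}}) :=
  [forall S in P, [|| S == M, S \subset A | S \subset B]].

Let disj (X Y : {set T}) : (forall x, x \in X -> x \in Y -> False) -> [disjoint X & Y].
Proof. by move=> h; apply/pred0P => x /=; apply/negP => /andP[/h]. Qed.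

Let sub0 (X Y S : {set T}) : (forall x, x \in X -> x \in Y -> False) ->
  S \subset X -> S \subset Y -> S = set0.
Proof.
move=> h sX sY; apply/setP => x; rewrite inE; apply/negP => xS.
exact: (h x (subsetP sX x xS) (subsetP sY x xS)).
Qed.

Let Pm := [set M] :\ set0.

Let coverPm : cover Pm = M.
Proof.
rewrite /Pm; case: (eqVneq M set0) => [->|nM].
  by rewrite setDv /cover big_set0.
suff -> : [set M] :\ set0 = [set M] by rewrite cover1.
by apply/setP => S; rewrite !inE; case: eqP => //= ->; rewrite eq_sym (negbTE nM).
Qed.

Let Phi (x : {set {set T}} * {set {set T}}) := x.1 :|: x.2 :|: Pm.
Let psi (P : {set {set T}}) :=
  ([set S in P | S \subset A], [set S in P | S \subset B]).

Lemma pc_split :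
  #|[set P : {set {set T}} | partition P [set: T] && okblocks P]| = pc A * pc B.
Proof.
rewrite /pc -cardsX.
set D := setX _ _.
have PhiD : forall x, x \in D -> partition (Phi x) [set: T] && okblocks (Phi x).
  case=> P1 P2; rewrite inE /= !inE => /andP[p1 p2].
  apply/andP; split.
    apply/and3P; split.
    - rewrite /cover /Phi !bigcup_setU -/(cover P1) -/(cover P2) -/(cover Pm).
      rewrite coverPm (cover_partition p1) (cover_partition p2).
      by apply/eqP/setP => x; rewrite !inE; case/or3P: (hcov x) => ->; rewrite ?orbT.
    - rewrite /Phi /=; apply: trivIsetU.
      + apply: trivIsetU.
        * exact: (partition_trivIset p1).
        * exact: (partition_trivIset p2).
        * rewrite (cover_partition p1) (cover_partition p2); apply: disj.
          by move=> x /hAB.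
      + by apply: (trivIsetS (subsetDl _ _)); apply: trivIset1.
      + rewrite /cover bigcup_setU -/(cover P1) -/(cover P2) -/(cover Pm).
        rewrite coverPm (cover_partition p1) (cover_partition p2); apply: disj.
        by move=> x; rewrite inE => /orP[/hAM|/hBM].
    - by rewrite !inE (partition0 p1) (partition0 p2) eqxx.
  apply/forall_inP => S; rewrite !inE => /orP[/orP[S1|S2]|/andP[_ /eqP->]].
  - by rewrite (partitionS p1 S1) orbT.
  - by rewrite (partitionS p2 S2) !orbT.
  - by rewrite eqxx.
have psiPhi : {in D, cancel Phi psi}.
  case=> P1 P2; rewrite inE /= !inE => /andP[p1 p2].
  rewrite /psi /Phi; congr pair; apply/setP => S; rewrite !inE.
  - case S1: (S \in P1); first by rewrite (partitionS p1 S1).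
    case S2: (S \in P2) => /=.
      apply/negP => sA.
      have := sub0 hAB sA (partitionS p2 S2) => E.
      by move: S2; rewrite E (partition0 p2).
    apply/negP => /andP[/andP[nM /eqP E] sA]; subst S.
    by move/eqP: nM; apply; apply: (sub0 hAM sA (subxx _)).
  - rewrite /=; case S2: (S \in P2); first by rewrite (partitionS p2 S2) orbT.
    case S1: (S \in P1) => /=.
      apply/negP => sB.
      have := sub0 hAB (partitionS p1 S1) sB => E.
      by move: S1; rewrite E (partition0 p1).
    apply/negP => /andP[/andP[nM /eqP E] sB]; subst S.
    by move/eqP: nM; apply; apply: (sub0 hBM sB (subxx _)).
rewrite -(card_in_imset (can_in_inj psiPhi)).
suff -> : [set P | partition P [set: T] && okblocks P] = Phi @: D by [].
apply/setP => P; rewrite inE; apply/idP/imsetP => [/andP[pP okP]|[x xD ->]];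
  last exact: PhiD.
have okS : forall S, S \in P -> [|| S == M, S \subset A | S \subset B].
  by move=> S SP; move/forall_inP: okP; apply.
have blk : forall x, pblock P x \in P /\ x \in pblock P x.
  move=> x; have xc : x \in cover P by rewrite (cover_partition pP) inE.
  by split; [apply: pblock_mem | rewrite mem_pblock].
exists (psi P).
  rewrite inE /= !inE; apply/andP; split; apply/and3P; split.
  - apply/eqP/setP => a; apply/bigcupP/idP => [[S]|aA].
      by rewrite inE => /andP[_ sA] /(subsetP sA).
    case: (blk a) => bP aB; exists (pblock P a) => //; rewrite inE bP /=.
    case/or3P: (okS _ bP) => // [/eqP E|sB].
      by exfalso; apply: (hAM aA); rewrite -E.
    by exfalso; apply: (hAB aA (subsetP sB a aB)).
  - apply: (trivIsetS _ (partition_trivIset pP)).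
    by apply/subsetP => S; rewrite inE => /andP[].
  - by rewrite inE (partition0 pP).
  - apply/eqP/setP => a; apply/bigcupP/idP => [[S]|aA].
      by rewrite inE => /andP[_ sA] /(subsetP sA).
    case: (blk a) => bP aB; exists (pblock P a) => //; rewrite inE bP /=.
    case/or3P: (okS _ bP) => // [/eqP E|sA].
      by exfalso; apply: (hBM aA); rewrite -E.
    by exfalso; apply: (hAB (subsetP sA a aB) aA).
  - apply: (trivIsetS _ (partition_trivIset pP)).
    by apply/subsetP => S; rewrite inE => /andP[].
  - by rewrite inE (partition0 pP).
apply/setP => S; rewrite /Phi /psi /Pm /= !inE.
apply/idP/idP => [SP|/orP[/orP[/andP[]|/andP[]] //|/andP[nM /eqP E]]]; last subst S.
  case/or3P: (okS _ SP) => [/eqP E|->|->]; rewrite ?SP ?orbT //.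
  by move: SP; rewrite E => SP; rewrite (partition_neq0 pP SP) eqxx !orbT.
case/set0Pn: nM => m mM.
case: (blk m) => bP mB.
case/or3P: (okS _ bP) => [/eqP <- //|sA|sB].
  by exfalso; apply: (hAM (subsetP sA m mB) mM).
by exfalso; apply: (hBM (subsetP sB m mB) mM).
Qed.
End Split.

Lemma pc_set0 (T : finType) : pc (set0 : {set T}) = 1.
Proof.
rewrite /pc -(cards1 (set0 : {set {set T}})); apply: eq_card => P.
by rewrite !inE partition_set0.
Qed.

Lemma Bell0 : Bell 0 = 1.
Proof.
by have := pc_Bell (set0 : {set bool}); rewrite cards0 pc_set0.
Qed.

Lemma pblock_ok (T : finType) (P : {set {set T}}) (M : {set T}) x0 :
  partition P [set: T] -> x0 \in M ->
  (pblock P x0 == M) = okblocks (~: M) set0 M P.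
Proof.
move=> pP x0M.
have tP := partition_trivIset pP.
have blk : forall x, pblock P x \in P /\ x \in pblock P x.
  move=> x; have xc : x \in cover P by rewrite (cover_partition pP) inE.
  by split; [apply: pblock_mem | rewrite mem_pblock].
apply/eqP/forall_inP => [E X XP|ok].
  apply/or3P; case: (boolP (X \subset ~: M)) => [h|]; first by constructor 2.
  case/subsetPn => y yX; rewrite inE negbK => yM.
  have : pblock P y = X by apply: def_pblock.
  rewrite (@same_pblock _ P y x0) // ?E // => ->.
  by constructor 1.
case: (blk x0) => bP xB.
case/or3P: (ok _ bP) => [/eqP //|sC|s0].
  by have := subsetP sC x0 xB; rewrite inE x0M.
by have := subsetP s0 x0 xB; rewrite inE.
Qed.

Lemma sum_card_set (T : finType) (F : nat -> nat) :
  \sum_(S : {set T}) F #|S| = \sum_(k < #|T|.+1) 'C(#|T|, k) * F k.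
Proof.
rewrite (partition_big (fun S : {set T} => (inord #|S| : 'I_#|T|.+1)) xpredT) //=.
apply: eq_bigr => k _.
rewrite -card_draws -sum_nat_const.
rewrite [RHS](eq_bigl (fun S : {set T} => inord #|S| == k)); last first.
  move=> S /=; rewrite inE; apply/eqP/eqP => [E|<-].
    by apply: val_inj; rewrite /= inordK ?E // -E ltnS max_card.
  by rewrite inordK // ltnS max_card.
by apply: eq_bigr => S /eqP <-; rewrite inordK // ltnS max_card.
Qed.

Lemma Some_in (T : finType) (S : {set T}) i :
  (Some i \in [set Some x | x in S]) = (i \in S).
Proof. by apply/imsetP/idP => [[x xS [->]]|iS] //; exists i. Qed.

Lemma BellS m : Bell m.+1 = \sum_(k < m.+1) 'C(m, k) * Bell (m - k).
Proof.
pose T := option 'I_m.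
have cT : #|[set: T]| = m.+1 by rewrite cardsT card_option card_ord.
have S1 := sum_card_set 'I_m (fun k => Bell (m - k)).
rewrite card_ord /= in S1; rewrite -S1.
rewrite -cT -pc_Bell /pc -sum1_card.
pose g (P : {set {set T}}) := [set i | Some i \in pblock P None].
pose MM (S : {set 'I_m}) : {set T} := None |: Some @: S.
rewrite (partition_big g xpredT) //=.
apply: eq_bigr => S _.
have E : forall P, partition P [set: T] -> (g P == S) = (pblock P None == MM S).
  move=> P pP.
  have Nb : None \in pblock P None.
    by rewrite mem_pblock (cover_partition pP) inE.
  have -> : pblock P None = MM (g P).
    apply/setP => x; rewrite !inE; case: x => [i|] /=; last by rewrite Nb.
    by rewrite Some_in inE.
  apply/eqP/eqP => [->//|H].
  apply/setP => i; move/setP: H => /(_ (Some i)).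
  by rewrite /MM /= !inE !Some_in /= => <-; rewrite inE.
rewrite (eq_bigl (fun P => (P \in [set P | partition P [set: T] && okblocks (~: MM S) set0 (MM S) P]))); last first.
  move=> P; rewrite !inE; case pP: (partition P [set: T]) => //=.
  by rewrite E // pblock_ok // /MM setU11.
rewrite sum1_card pc_split.
- rewrite pc_set0 muln1 pc_Bell.
  have := cardsC (MM S); rewrite /T card_option card_ord /MM cardsU1.
  rewrite card_imset; last exact: Some_inj.
  have -> : (None \in [set Some x | x in S]) = false by apply/imsetP => [[]].
  by rewrite /= add1n => H; congr Bell; lia.
- by move=> x _; rewrite inE.
- by move=> x; rewrite inE => /negP.
- by move=> x; rewrite inE.
- by move=> x; rewrite in_setC in_set0; case: (x \in MM S).
Qed.

Lemma c1E (x : 'I_2) : (x == color1) = ~~ (x == color2).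
Proof. by case: x => [[|[|]]]. Qed.

Lemma c21 : (color2 == color1) = false. Proof. by []. Qed.
Lemma c12 : (color1 == color2) = false. Proof. by []. Qed.

Section Main4.
Variable n : nat.


Definition validc (c : {ffun 'I_n -> 'I_2}) (P : {set {set 'I_n}}) :=
  [&& is_setpart P, ~~ contains_1112 P c & ~~ contains_1221 P c].

Definition cnt c := #|[set P | validc c P]|.

Lemma sbP (P : {set {set 'I_n}}) : partition P [set: 'I_n] ->
  forall x y, same_block P x y = (y \in pblock P x).
Proof.
move=> pP x y; have tP := partition_trivIset pP.
have xc : x \in cover P by rewrite (cover_partition pP) inE.
apply/existsP/idP => [[S /and3P[SP xS yS]]|yb].
  by rewrite (def_pblock tP SP xS).
by exists (pblock P x); rewrite pblock_mem //= yb mem_pblock xc.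
Qed.

Definition colA a : {ffun 'I_n -> 'I_2} :=
  [ffun i : 'I_n => if a <= i then color2 else color1].

Lemma validA a P : validc (colA a) P =
  is_setpart P && okblocks [set i : 'I_n | i < a] [set i : 'I_n | a <= i] set0 P.
Proof.
rewrite /validc; case pP: (is_setpart P) => //=.
have -> : contains_1221 P (colA a) = false.
  apply: negbTE; apply/existsP => -[i] /existsP[j] /and4P[ij _].
  rewrite !ffunE; case: ifP => ai; rewrite ?c12 // => _.
  by case: ifP => aj; rewrite ?c21 //; lia.
rewrite andbT /contains_1112; apply/negP/forall_inP => [no S SP|ok].
  apply/or3P; case: (boolP (S \subset [set i : 'I_n | i < a])) => [h|]; first by constructor 2.
  case/subsetPn => x xS; rewrite inE -leqNgt => ax.
  case: (boolP (S \subset [set i : 'I_n | a <= i])) => [h|]; first by constructor 3.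
  case/subsetPn => y yS; rewrite inE -ltnNge => ya.
  exfalso; apply: no; apply/existsP; exists y; apply/existsP; exists x.
  apply/and4P; split.
  - lia.
  - by apply/existsP; exists S; rewrite SP xS yS.
  - by rewrite ffunE leqNgt ya.
  - by rewrite ffunE ax.
case/existsP => i /existsP[j /and4P[ij /existsP[S /and3P[SP iS jS]]]].
rewrite !ffunE; case: ifP => ai; rewrite ?c21 // => _.
case: ifP => aj; rewrite ?c12 // => _.
case/or3P: (ok S SP) => [/eqP E|sA|sB].
- by move: iS; rewrite E inE.
- by have := subsetP sA j jS; rewrite inE; lia.
- by have := subsetP sB i iS; rewrite inE; lia.
Qed.


Lemma card_lt a : a <= n -> #|[set i : 'I_n | i < a]| = a.
Proof.
move=> an.
have -> : [set i : 'I_n | i < a] = (widen_ord an) @: [set: 'I_a].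
  apply/setP => i; rewrite inE; apply/idP/imsetP => [ia|[j _ ->]] //=.
  by exists (Ordinal ia); rewrite ?inE //; apply: val_inj.
rewrite card_imset ?cardsT ?card_ord //.
by move=> x y /(congr1 val) /= E; apply: val_inj.
Qed.

Lemma card_ge a : a <= n -> #|[set i : 'I_n | a <= i]| = n - a.
Proof.
move=> an; have := cardsC [set i : 'I_n | i < a]; rewrite card_lt // card_ord.
have -> : ~: [set i : 'I_n | i < a] = [set i : 'I_n | a <= i].
  by apply/setP => i; rewrite !inE -leqNgt.
lia.
Qed.

Lemma cntA a : a <= n -> cnt (colA a) = Bell a * Bell (n - a).
Proof.
move=> an; rewrite /cnt.
rewrite (eq_card (B := [set P | partition P [set: 'I_n] && okblocks [set i : 'I_n | i < a] [set i : 'I_n | a <= i] set0 P])); last first.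
  by move=> P; rewrite !inE validA.
rewrite pc_split ?pc_Bell ?card_lt ?card_ge //.
- by move=> x; rewrite !inE; lia.
- by move=> x; rewrite !inE.
- by move=> x; rewrite !inE.
- by move=> x; rewrite !inE; case: leqP.
Qed.

Definition colB p r q : {ffun 'I_n -> 'I_2} :=
  [ffun i : 'I_n => if (p <= i < r) || (q < i) then color2 else color1].

Lemma cB2 p r q i : (colB p r q i == color2) = ((p <= i < r) || (q < i)).
Proof. by rewrite ffunE; case: ifP. Qed.
Lemma cB1 p r q i : (colB p r q i == color1) = ~~ ((p <= i < r) || (q < i)).
Proof. by rewrite c1E cB2. Qed.

Lemma validB p r q P : p < r -> r <= q -> q < n ->
  validc (colB p r q) P = is_setpart P &&
    okblocks [set i : 'I_n | i < p] [set i : 'I_n | q < i] [set i : 'I_n | p <= i <= q] P.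
Proof.
move=> pr rq qn.
rewrite /validc; case pP: (is_setpart P) => //=.
have tP := partition_trivIset pP.
have blk : forall x, pblock P x \in P /\ x \in pblock P x.
  move=> x; have xc : x \in cover P by rewrite (cover_partition pP) inE.
  by split; [apply: pblock_mem | rewrite mem_pblock].
have sP := sbP pP.
apply/idP/idP.
  case/andP => no12 no21.
  have N12 : forall i j : 'I_n, i < j -> j \in pblock P i ->
      colB p r q i == color1 -> colB p r q j == color2 -> False.
    move=> i j ij jb c1 c2; move/negP: no12; apply; apply/existsP; exists i.
    by apply/existsP; exists j; rewrite ij sP jb c1 c2.
  have N21 : forall i j : 'I_n, i < j -> colB p r q i == color2 ->
      colB p r q j == color1 -> j \in pblock P i.
    move=> i j ij c2 c1; case: (boolP (j \in pblock P i)) => // nb.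
    exfalso; move/negP: no21; apply; apply/existsP; exists i.
    by apply/existsP; exists j; rewrite ij sP nb c1 c2.
  have pn : p < n by lia.
  have rn : r < n by lia.
  pose op := Ordinal pn; pose or := Ordinal rn.
  have rb : or \in pblock P op by apply: N21; rewrite /= ?cB2 ?cB1 //=; lia.
  have Mem : forall x : 'I_n, (x \in pblock P op) = (p <= x <= q).
    move=> x; apply/idP/idP => [xb|xM].
      have Ex : pblock P x = pblock P op by apply: same_pblock.
      case: (ltnP x p) => xp.
        exfalso; apply: (N12 x op) => //; rewrite ?cB1 ?cB2 //=; try lia.
        by rewrite Ex; case: (blk op).
      case: (leqP x q) => xq //.
      exfalso; apply: (N12 or x) => //; rewrite ?cB1 ?cB2 //=; try lia.
      by rewrite (same_pblock tP rb).
    case: (ltnP x r) => xr.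
      have xor : or \in pblock P x by apply: N21; rewrite ?cB1 ?cB2 //=; lia.
      have E1 := same_pblock tP xor.
      have E2 := same_pblock tP rb.
      by rewrite -E2 E1; case: (blk x).
    case: (eqVneq x op) => [->|xop]; first by case: (blk op).
    apply: N21; rewrite ?cB1 ?cB2 //=; try lia.
  apply/forall_inP => X XP.
  case: (boolP [exists x in X, p <= x <= q]) => [/exists_inP[x xX xM]|noM].
    have : pblock P x = X by apply: def_pblock.
    rewrite (@same_pblock _ P x op) ?Mem // => EX.
    apply/or3P; constructor 1; apply/eqP/setP => y.
    by rewrite -EX Mem inE.
  have out : forall y : 'I_n, y \in X -> (y < p) || (q < y).
    move=> y yX; case: (boolP (p <= y <= q)) => [yM|]; last lia.
    by move/negP: noM; case; apply/exists_inP; exists y.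
  apply/or3P; case: (boolP (X \subset [set i : 'I_n | i < p])) => [h|]; first by constructor 2.
  case/subsetPn => y yX; rewrite inE -leqNgt => py.
  have qy : q < y by have := out y yX; lia.
  constructor 3; apply/subsetP => z zX; rewrite inE.
  have := out z zX; case/orP => // zp; exfalso.
  apply: (N12 z y); first lia.
  - by rewrite (def_pblock tP XP zX).
  - rewrite cB1; lia.
  - rewrite cB2; lia.
move=> /forall_inP ok.
have MB : forall x : 'I_n, p <= x <= q -> pblock P x = [set i : 'I_n | p <= i <= q].
  move=> x xM; case: (blk x) => bP xb.
  case/or3P: (ok _ bP) => [/eqP //|sA|sB].
    by have := subsetP sA x xb; rewrite inE; lia.
  by have := subsetP sB x xb; rewrite inE; lia.
apply/andP; split.
  apply/negP => /existsP[i] /existsP[j] /and4P[ij].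
  rewrite sP cB1 cB2 => jb c1 c2.
  case: (blk i) => bP ib.
  case/or3P: (ok _ bP) => [/eqP E|sA|sB].
  - move: ib jb; rewrite E !inE; lia.
  - by have := subsetP sA j jb; rewrite inE; lia.
  - by have := subsetP sB i ib; rewrite inE; lia.
apply/negP => /existsP[i] /existsP[j] /and4P[ij].
rewrite sP cB1 cB2 => /negP jb c2 c1; apply: jb.
rewrite MB ?inE; lia.
Qed.

Lemma cntB p r q : p < r -> r <= q -> q < n ->
  cnt (colB p r q) = Bell p * Bell (n - q.+1).
Proof.
move=> pr rq qn; rewrite /cnt.
rewrite (eq_card (B := [set P | partition P [set: 'I_n] && okblocks [set i : 'I_n | i < p] [set i : 'I_n | q < i] [set i : 'I_n | p <= i <= q] P])); last first.
  by move=> P; rewrite !inE validB.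
rewrite pc_split ?pc_Bell ?card_lt ?card_ge //; try lia.
- by move=> x; rewrite !inE; lia.
- by move=> x; rewrite !inE; lia.
- by move=> x; rewrite !inE; lia.
- by move=> x; rewrite !inE; lia.
Qed.

End Main4.
Arguments colA {n} a.
Arguments colB {n} p r q.

Section Main5.
Variable n : nat.
Lemma vfacts (c : {ffun 'I_n -> 'I_2}) (P : {set {set 'I_n}}) : validc c P ->
  [/\ partition P [set: 'I_n],
   (forall i j : 'I_n, i < j -> j \in pblock P i -> c i == color1 -> c j == color2 -> False) &
   (forall i j : 'I_n, i < j -> c i == color2 -> c j == color1 -> j \in pblock P i)].
Proof.
case/and3P => pP no12 no21; have sP := sbP pP; split => //.
  move=> i j ij jb c1 c2; move/negP: no12; apply; apply/existsP; exists i.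
  by apply/existsP; exists j; rewrite ij sP jb c1 c2.
move=> i j ij c2 c1; case: (boolP (j \in pblock P i)) => // nb.
exfalso; move/negP: no21; apply; apply/existsP; exists i.
by apply/existsP; exists j; rewrite ij sP nb c1 c2.
Qed.

Lemma classify (c : {ffun 'I_n -> 'I_2}) (P : {set {set 'I_n}}) : validc c P ->
  (exists a, a <= n /\ c = colA a) \/
  (exists p r q, [/\ p < r, r <= q, q < n & c = colB p r q]).
Proof.
case/vfacts => pP N12 N21.
have tP := partition_trivIset pP.
have blk : forall x, pblock P x \in P /\ x \in pblock P x.
  move=> x; have xc : x \in cover P by rewrite (cover_partition pP) inE.
  by split; [apply: pblock_mem | rewrite mem_pblock].
pose tw k := if (insub k : option 'I_n) is Some i then c i == color2 else false.
pose on k := if (insub k : option 'I_n) is Some i then c i == color1 else false.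
have twE : forall i : 'I_n, tw i = (c i == color2) by move=> i; rewrite /tw valK.
have onE : forall i : 'I_n, on i = (c i == color1) by move=> i; rewrite /on valK.
have twon : forall k, k < n -> on k = ~~ tw k.
  by move=> k kn; rewrite /on /tw; case: insubP => [i _ _|]; rewrite ?c1E ?kn.
have onlt : forall k, on k -> k < n.
  by move=> k; rewrite /on; case: insubP => [i -> _|].
have twlt : forall k, tw k -> k < n.
  by move=> k; rewrite /tw; case: insubP => [i -> _|].
case: (boolP [exists i : 'I_n, exists j : 'I_n, [&& i < j, c i == color2 & c j == color1]]) => [h21|no21].
  right; case/existsP: h21 => i0 /existsP[j0 /and3P[ij c2 c1]].
  have exp : exists k, tw k by exists i0; rewrite twE.
  case: (ex_minnP exp) => p twp minp.
  have pi0 : p <= i0 by apply: minp; rewrite twE.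
  have exr : exists k, (p < k) && on k by exists j0; rewrite onE c1 andbT; lia.
  case: (ex_minnP exr) => r /andP[pr onr] minr.
  have rj0 : r <= j0 by apply: minr; rewrite onE c1 andbT; lia.
  have ubq : forall k, on k -> k <= n.-1 by move=> k /onlt kn; lia.
  have exq : exists k, on k by exists r.
  case: (ex_maxnP exq ubq) => q onq maxq.
  have rq : r <= q by apply: maxq.
  have qn : q < n by apply: onlt.
  have pn : p < n by lia.
  have rn : r < n by lia.
  exists p, r, q; split => //.
  apply/ffunP => i; rewrite ffunE.
  case: ifP => H; apply/eqP.
    rewrite -twE; case/orP: H => [/andP[pi ir]|qi].
      case: (eqVneq (val i) p) => [E|nip]; first by rewrite E.
      apply: contraTT ir; rewrite -twon // -leqNgt => oni; apply: minr.
      by rewrite oni andbT ltn_neqAle eq_sym nip pi.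
    apply: contraTT qi; rewrite -twon // -leqNgt => oni; exact: maxq.
  rewrite -onE twon ?ltn_ord //; apply/negP => twi.
  have ip : p <= i by apply: minp.
  have ri : r <= i by lia.
  have iq : i <= q by lia.
  pose op := Ordinal pn; pose or := Ordinal rn; pose oq := Ordinal qn.
  have cop : c op == color2 by rewrite -twE.
  have cor : c or == color1 by rewrite -onE.
  have coq : c oq == color1 by rewrite -onE.
  have nir : val i != r.
    by apply/eqP => E; move: onr; rewrite twon // -E twi.
  have niq : val i != q.
    by apply/eqP => E; move: onq; rewrite twon // -E twi.
  have b1 : or \in pblock P op by apply: N21 => //=.
  have b2 : oq \in pblock P i by apply: N21; rewrite -?twE //= ltn_neqAle niq iq.
  have b3 : oq \in pblock P op by apply: (N21 op oq) => //=; apply: leq_trans pr rq.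
  apply: (N12 or i); rewrite -?twE //=; first by rewrite ltn_neqAle eq_sym nir ri.
  rewrite (same_pblock tP b1) -(same_pblock tP b3) (same_pblock tP b2).
  by case: (blk i).
left.
have exa : exists k, (n <= k) || tw k by exists n; rewrite leqnn.
case: (ex_minnP exa) => a Ha mina.
have an : a <= n by apply: mina; rewrite leqnn.
exists a; split => //.
apply/ffunP => i; rewrite ffunE.
case: leqP => ai; apply/eqP.
  have twa : tw a by move: Ha; case: leqP => // na; have := ltn_ord i; lia.
  rewrite -twE; case: (eqVneq (val i) a) => [->//|nia].
  case: (boolP (tw i)) => // twi; exfalso; move/negP: no21; apply.
  have akn : a < n by apply: twlt.
  apply/existsP; exists (Ordinal akn); apply/existsP; exists i.
  rewrite -twE twa c1E -twE twi /= andbT /= ltn_neqAle eq_sym nia ai //.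
rewrite c1E -twE; apply/negP => twi.
have := mina i; rewrite twi orbT => /(_ isT); lia.
Qed.

End Main5.

Section Main6.
Variable n : nat.
Lemma colAE a (i : 'I_n) : (colA a i == color2) = (a <= i).
Proof. by rewrite ffunE; case: ifP. Qed.

Lemma colA_inj a a' : a <= n -> a' <= n -> colA (n:=n) a = colA a' -> a = a'.
Proof.
move=> an a'n /ffunP E.
case: (ltngtP a a') => // h; exfalso.
  have ain : a < n by lia.
  have := E (Ordinal ain); move/(congr1 (fun x => x == color2)).
  by rewrite !colAE /=; lia.
have ain : a' < n by lia.
have := E (Ordinal ain); move/(congr1 (fun x => x == color2)).
by rewrite !colAE /=; lia.
Qed.

Lemma colB_inj p r q p' r' q' : p < r -> r <= q -> q < n ->
  p' < r' -> r' <= q' -> q' < n -> colB (n:=n) p r q = colB p' r' q' ->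
  [/\ p = p', r = r' & q = q'].
Proof.
move=> pr rq qn pr' rq' qn' /ffunP E.
have F : forall k, k < n -> ((p <= k < r) || (q < k)) = ((p' <= k < r') || (q' < k)).
  by move=> k kn; have := E (Ordinal kn); move/(congr1 (fun x => x == color2)); rewrite !cB2.
have pp : p = p'.
  case: (ltngtP p p') => // h.
    by have := F p; lia.
  by have := F p'; lia.
subst p'.
have rr : r = r'.
  case: (ltngtP r r') => // h.
    by have := F r; lia.
  by have := F r'; lia.
subst r'; split => //.
case: (ltngtP q q') => // h.
  by have := F q'; lia.
by have := F q; lia.
Qed.

Lemma colAB a p r q : p < r -> r <= q -> q < n -> colA (n:=n) a != colB p r q.
Proof.
move=> pr rq qn; apply/eqP => /ffunP E.
have pn : p < n by lia.
have rn : r < n by lia.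
have := E (Ordinal pn); move/(congr1 (fun x => x == color2)); rewrite colAE cB2 /=.
have := E (Ordinal rn); move/(congr1 (fun x => x == color2)); rewrite colAE cB2 /=.
lia.
Qed.

Definition IB : {set 'I_n * 'I_n * 'I_n} :=
  [set t : 'I_n * 'I_n * 'I_n | (t.1.1 < t.1.2) && (t.1.2 <= t.2)].

Lemma sum_cnt : \sum_(c : {ffun 'I_n -> 'I_2}) cnt c =
  \sum_(a < n.+1) Bell a * Bell (n - a) +
  \sum_(t in IB) Bell t.1.1 * Bell (n - t.2.+1).
Proof.
pose hA (a : 'I_n.+1) := colA (n:=n) a.
pose hB (t : 'I_n * 'I_n * 'I_n) := colB (n:=n) t.1.1 t.1.2 t.2.
rewrite (bigID (fun c => c \in hA @: [set: 'I_n.+1])) /=.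
rewrite [X in _ + X](bigID (fun c => c \in hB @: IB)) /=.
rewrite [X in _ + (_ + X)]big1 ?addn0; last first.
  move=> c /andP[nA nB]; apply/eqP; rewrite cards_eq0; apply/eqP/setP => P.
  rewrite inE in_set0; apply/negP => v.
  case: (classify v) => [[a [an E]]|[p [r [q [pr rq qn E]]]]]; subst c.
    by move/negP: nA; apply; apply/imsetP; exists (Ordinal (n := n.+1) (m := a) an); rewrite ?inE.
  move/negP: nB; apply; apply/imsetP.
  have pn : p < n by lia.
  have rn : r < n by lia.
  by exists (Ordinal pn, Ordinal rn, Ordinal qn); rewrite // inE /=; apply/andP.
congr (_ + _).
  rewrite (eq_bigl (fun c => c \in hA @: [set: 'I_n.+1])) //.
  rewrite big_imset /=; last first.
    move=> a a' _ _ /colA_inj E; apply: val_inj; apply: E; rewrite -ltnS ltn_ord //.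
  by apply: eq_big => [a|a _]; rewrite ?inE // cntA // -ltnS.
rewrite (eq_bigl (fun c => c \in hB @: IB)); last first.
  move=> c; case: (boolP (c \in hB @: IB)); rewrite ?andbF ?andbT //.
  case/imsetP => t; rewrite inE => /andP[h1 h2] ->.
  apply/negP => /imsetP[a _ E].
  by move/eqP: E; apply/negP; rewrite eq_sym; apply: colAB.
rewrite big_imset /=; last first.
  move=> [[p r] q] [[p' r'] q']; rewrite !inE /= => /andP[h1 h2] /andP[h3 h4] E.
  case: (colB_inj h1 h2 (ltn_ord q) h3 h4 (ltn_ord q') E) => E1 E2 E3.
  by congr (_, _, _); apply: val_inj.
apply: eq_bigr => t; rewrite inE => /andP[h1 h2].
by rewrite /hB cntB.
Qed.

Lemma card_avoiders : #|avoiders n| = \sum_(c : {ffun 'I_n -> 'I_2}) cnt c.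
Proof.
rewrite -sum1_card big_mkcond /=.
have -> : \sum_(x : {set {set 'I_n}} * {ffun 'I_n -> 'I_2}) (if x \in avoiders n then 1 else 0)
  = \sum_(P : {set {set 'I_n}}) \sum_(c : {ffun 'I_n -> 'I_2}) (if (P, c) \in avoiders n then 1 else 0).
  by rewrite pair_big /=; apply: eq_bigr => -[P c].
rewrite exchange_big /=; apply: eq_bigr => c _.
rewrite /cnt -sum1_card [RHS]big_mkcond /=; apply: eq_bigr => P _.
by rewrite !inE.
Qed.

End Main6.
Arguments IB {n}.

Definition G n p := \sum_(r < n) \sum_(q < n) (if (p < r) && (r <= q) then Bell (n - q.+1) else 0).

Lemma card_between n p q : q < n -> #|[set r : 'I_n | (p < r) && (r <= q)]| = q - p.
Proof.
move=> qn.
have -> : [set r : 'I_n | (p < r) && (r <= q)] = [set r : 'I_n | r < q.+1] :\: [set r : 'I_n | r < p.+1].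
  by apply/setP => r; rewrite !inE; lia.
rewrite cardsD.
have -> : [set r : 'I_n | r < q.+1] :&: [set r : 'I_n | r < p.+1] = [set r : 'I_n | r < minn q.+1 p.+1].
  by apply/setP => r; rewrite !inE; lia.
rewrite !card_lt //; lia.
Qed.

Lemma G_eq n p : G n p = \sum_(q < n) (q - p) * Bell (n - q.+1).
Proof.
rewrite /G exchange_big /=; apply: eq_bigr => q _.
rewrite -big_mkcond /=.
rewrite (eq_bigl (fun r => r \in [set r : 'I_n | (p < r) && (r <= q)])); last by move=> r; rewrite inE.
by rewrite sum_nat_const card_between.
Qed.

Lemma S1_eq n : \sum_(2 <= j < n.+1) \sum_(0 <= k < (n - j).+1) Bell (n - j - k) = G n 0.
Proof.
pose H i := \sum_(q < n) (if i <= q then Bell (n - q.+1) else 0).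
have E1 : forall j, 2 <= j < n.+1 ->
    \sum_(0 <= k < (n - j).+1) Bell (n - j - k) = H j.-1.
  move=> j /andP[j2 jn].
  have -> : \sum_(0 <= k < (n - j).+1) Bell (n - j - k) = \sum_(j.-1 <= q < n) Bell (n - q.+1).
    rewrite -{1}[j.-1]add0n big_addn.
    have -> : n - j.-1 = (n - j).+1 by lia.
    by apply: eq_big_nat => k kr; congr Bell; lia.
  by rewrite big_geq_mkord big_mkcond.
rewrite (eq_big_nat _ _ E1).
rewrite -[2]/(1 + 1) big_addn.
have -> : n.+1 - 1 = n by lia.
rewrite (eq_big_nat _ _ (F2 := H)); last by move=> i _; rewrite addn1.
rewrite big_geq_mkord big_mkcond /G; apply: eq_bigr => i _.
rewrite /H; case: (posnP i) => [->|ip] /=.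
  by rewrite big1.
by [].  
Qed.

Lemma inner_eq n j : 2 <= j < n ->
  \sum_(1 <= k < (n - j).+1) k * Bell (n - j - k) = G n j.-1.
Proof.
move=> /andP[j2 jn]; rewrite G_eq.
have -> : \sum_(1 <= k < (n - j).+1) k * Bell (n - j - k) =
    \sum_(1 + j.-1 <= q < n) (q - j.-1) * Bell (n - q.+1).
  rewrite big_addn.
  have -> : n - j.-1 = (n - j).+1 by lia.
  apply: eq_big_nat => k kr; congr (_ * Bell _); lia.
rewrite big_geq_mkord big_mkcond; apply: eq_bigr => q _ /=.
case: ifP => // h.
have -> : q - j.-1 = 0 by lia.
by [].
Qed.

Lemma Bell_inner m : Bell m + \sum_(1 <= k < m.+1) 'C(m, k) * Bell (m - k) = Bell m.+1.
Proof.
rewrite BellS -(big_mkord xpredT (fun k => 'C(m, k) * Bell (m - k))).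
by rewrite (@big_ltn _ _ _ 0) // bin0 mul1n subn0.
Qed.

Lemma Bell1 : Bell 1 = 1.
Proof. by rewrite BellS big_ord1 bin0 Bell0. Qed.

Lemma convAB n : 2 <= n -> \sum_(a < n.+1) Bell a * Bell (n - a) =
  2 * Bell n + Bell (n - 1) + \sum_(2 <= j < n) Bell (j - 1) * Bell (n - j).+1.
Proof.
move=> n2.
rewrite -(big_mkord xpredT (fun a => Bell a * Bell (n - a))).
rewrite (@big_ltn _ _ _ 0) // big_nat_recr /=; last lia.
rewrite (@big_cat_nat _ _ _ n.-1) /=; [|lia|lia].
have E : \sum_(n.-1 <= a < n) Bell a * Bell (n - a) = Bell n.-1 * Bell (n - n.-1).
  by move: n2; case: n => [|n'] // _; rewrite big_nat1.
rewrite E.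
have -> : n - n.-1 = 1 by lia.
have -> : \sum_(1 <= i < n.-1) Bell i * Bell (n - i) = \sum_(2 <= j < n) Bell (j - 1) * Bell (n - j).+1.
  rewrite -[2]/(1 + 1) big_addn.
  have -> : n - 1 = n.-1 by lia.
  by apply: eq_big_nat => i ir; congr (Bell _ * Bell _); lia.
rewrite Bell1 Bell0 subn0 subnn Bell0 muln1 mul1n muln1 -subn1.
lia.
Qed.

Lemma Gsum n : 2 <= n -> \sum_(p < n) Bell p * G n p =
  G n 0 + \sum_(2 <= j < n) Bell (j - 1) * G n (j - 1).
Proof.
move=> n2.
rewrite -(big_mkord xpredT (fun p => Bell p * G n p)).
rewrite (@big_ltn _ _ _ 0) /=; last lia.
rewrite (@big_cat_nat _ _ _ n.-1) /=; [|lia|lia].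
have E : \sum_(n.-1 <= a < n) Bell a * G n a = Bell n.-1 * G n n.-1.
  by move: n2; case: n => [|n'] // _; rewrite big_nat1.
have G0 : G n n.-1 = 0.
  rewrite G_eq big1 // => q _; have := ltn_ord q.
  by move=> h; have -> : q - n.-1 = 0 by lia.
rewrite E G0 muln0 addn0 Bell0 mul1n.
congr (_ + _).
rewrite -[2]/(1 + 1) big_addn.
have -> : n - 1 = n.-1 by lia.
by apply: eq_big_nat => i ir; rewrite addn1 subn1.
Qed.

Lemma triple n : \sum_(t in @IB n) Bell t.1.1 * Bell (n - t.2.+1) =
  \sum_(p < n) Bell p * G n p.
Proof.
have -> : \sum_(p < n) Bell p * G n p = \sum_(p < n) \sum_(r < n) \sum_(q < n)
    (if (p < r) && (r <= q) then Bell p * Bell (n - q.+1) else 0).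
  rewrite /G; apply: eq_bigr => p _; rewrite big_distrr; apply: eq_bigr => r _.
  rewrite big_distrr; apply: eq_bigr => q _ /=.
  by case: ifP; rewrite ?muln0.
rewrite pair_big /= pair_big /= big_mkcond /=.
by apply: eq_bigr => -[[p r] q] _ /=; rewrite inE /=.
Qed.

Theorem mainTheorem7 (n : nat) (hn : 2 <= n) :
  #|avoiders n| =
    2 * Bell n
    + \sum_(2 <= j < n.+1) \sum_(0 <= k < (n - j).+1) Bell (n - j - k)
    + Bell (n - 1)
    + \sum_(2 <= j < n)
        Bell (j - 1) * (Bell (n - j)
          + \sum_(1 <= k < (n - j).+1) ((k + 'C(n - j, k)) * Bell (n - j - k))).
Proof.
rewrite card_avoiders sum_cnt triple convAB // Gsum // S1_eq.
have -> : \sum_(2 <= j < n) Bell (j - 1) * (Bell (n - j)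
          + \sum_(1 <= k < (n - j).+1) ((k + 'C(n - j, k)) * Bell (n - j - k)))
  = \sum_(2 <= j < n) Bell (j - 1) * Bell (n - j).+1 + \sum_(2 <= j < n) Bell (j - 1) * G n (j - 1).
  rewrite -big_split /=; apply: eq_big_nat => j jr.
  rewrite -mulnDr; congr (_ * _).
  under eq_bigr => k _ do rewrite mulnDl.
  rewrite big_split /= addnA addnAC Bell_inner subn1 inner_eq //.
  lia.
Qed.
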